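(* Let $K/\mathbb{Q}_p$ be a finite extension with ring of integers $A$, uniformizer $\pi$ and ramification index $e$, and suppose $\log_p\frac{e}{p-1}$ is not an integer. Let $n$ be a positive integer and let $I_n$ be the ideal of $A$ generated by all $a^n-1$ with $a\in A$, $a\equiv1\bmod\pi$. Then $A/I_n\cong A/\pi^i$, where $i=e\big(\nu_p(n)-\lceil\log_p\frac{e}{p-1}\rceil\big)+p^{\lceil\log_p\frac{e}{p-1}\rceil}$ if $\lceil\log_p\frac{e}{p-1}\rceil\le\nu_p(n)$, and $i=p^{\nu_p(n)}$ if $\lceil\log_p\frac{e}{p-1}\rceil>\nu_p(n)$.
   Context: $\nu_p$ denotes the $p$-adic valuation. *)

(* Defs.v *)
From HB Require Import structures.
From mathcomp Require Import all_boot all_order all_algebra.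
Set Implicit Arguments. Unset Strict Implicit. Unset Printing Implicit Defensive.
Import Order.TTheory GRing.Theory Num.Theory.
Local Open Scope ring_scope.

Definition dvdA (A : comNzRingType) (d x : A) : Prop := exists y : A, x = d * y.

Definition is_DVR_with_uniformizer (A : idomainType) (pi : A) : Prop :=
  pi != 0 /\ pi \isn't a GRing.unit /\
  (forall a : A, a != 0 -> exists (u : A) (k : nat), u \is a GRing.unit /\ a = u * pi ^+ k).

Definition pi_adically_complete (A : idomainType) (pi : A) : Prop :=
  forall x : nat -> A, (forall k : nat, dvdA (pi ^+ k) (x k.+1 - x k)) ->
    exists l : A, forall k : nat, dvdA (pi ^+ k) (l - x k).

Definition char_zero (A : idomainType) : Prop := forall m : nat, (m.+1)%:R != 0 :> A.

Definition finite_residue_field (A : idomainType) (pi : A) : Prop :=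
  exists s : seq A, forall a : A, exists2 b, b \in s & dvdA pi (a - b).

(* A is the ring of integers of a finite extension K of Q_p, with uniformizer pi
   and ramification index e (p = unit * pi^e).  Equivalently: A is a complete DVR
   of characteristic 0 with finite residue field of characteristic p. *)
Definition padic_ring_of_integers (A : idomainType) (p : nat) (pi : A) (e : nat) : Prop :=
  prime p /\ (0 < e)%N /\ is_DVR_with_uniformizer pi /\ pi_adically_complete pi /\
  char_zero A /\ finite_residue_field pi /\
  exists u : A, u \is a GRing.unit /\ p%:R = u * pi ^+ e.

Definition I_ideal (A : idomainType) (pi : A) (n : nat) (x : A) : Prop :=
  exists s : seq (A * A),
    (forall q, q \in s -> dvdA pi (q.2 - 1)) /\
    x = \sum_(q <- s) q.1 * (q.2 ^+ n - 1).

(* A/I and A/J are isomorphic as rings (I, J given as membership predicates of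
   ideals): phi : A -> A induces a ring isomorphism A/I -> A/J. *)
Definition quotients_isomorphic (A : comNzRingType) (I J : A -> Prop) : Prop :=
  exists phi : A -> A,
    (forall x y, I (x - y) <-> J (phi x - phi y)) /\
    (forall x y, J (phi (x + y) - (phi x + phi y))) /\
    (forall x y, J (phi (x * y) - phi x * phi y)) /\
    J (phi 1 - 1) /\
    (forall z, exists x, J (z - phi x)).

(* Main.v *)
Require Import Defs.
From HB Require Import structures.
From mathcomp Require Import all_boot all_order all_algebra.
From mathcomp Require Import zify ring.
Set Implicit Arguments. Unset Strict Implicit. Unset Printing Implicit Defensive.
Import Order.TTheory GRing.Theory Num.Theory.
Local Open Scope ring_scope.

Definition dvr_fact (A : idomainType) (pi : A) :=
  forall a : A, a != 0 -> exists (u : A) (k : nat), u \is a GRing.unit /\ a = u * pi ^+ k.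

Lemma unit_notdvd (A : idomainType) (pi w s : A) :
  pi \isn't a GRing.unit -> w \is a GRing.unit -> w <> pi * s.
Proof.
move=> npi wU ws; move/negP: npi; apply; apply/unitrPr.
exists (s * w^-1); by rewrite mulrA -ws divrr.
Qed.

Lemma unit_add (A : idomainType) (pi : A) (npi : pi \isn't a GRing.unit)
  (hd : dvr_fact pi) (w t : A) :
  w \is a GRing.unit -> w + pi * t \is a GRing.unit.
Proof.
move=> wU; have [z0|nz] := eqVneq (w + pi * t) 0.
  exfalso; apply: (unit_notdvd npi wU (s := - t)).
  by rewrite mulrN; apply/eqP; rewrite -addr_eq0 z0.
have [u [k [uU E]]] := hd _ nz.
case: k E => [|k] E; first by rewrite E expr0 mulr1.
exfalso; apply: (unit_notdvd npi wU (s := u * pi ^+ k - t)).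
have -> : w = (w + pi * t) - pi * t by rewrite addrK.
rewrite E exprS; ring.
Qed.

Lemma dvd_unit_not (A : idomainType) (pi x : A) : pi \isn't a GRing.unit -> dvdA pi 1 -> False.
Proof. move=> npi [y hy]. by apply: (unit_notdvd npi (unitr1 A) hy). Qed.

Lemma sum_dvd (A : idomainType) (pi : A) (n : nat) (P : pred 'I_n) (F : 'I_n -> A)
  (ex : 'I_n -> nat) (w : 'I_n -> A) N :
  (forall i, F i = pi ^+ (ex i) * w i) -> (forall i, P i -> N <= ex i)%N ->
  exists r, \sum_(i | P i) F i = pi ^+ N * r.
Proof.
move=> hF hN; exists (\sum_(i | P i) pi ^+ (ex i - N) * w i).
rewrite mulr_sumr; apply: eq_bigr => i Pi.
by rewrite hF mulrA -exprD subnKC // hN.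
Qed.

Lemma sum_exact (A : idomainType) (pi : A) (npi : pi \isn't a GRing.unit)
  (hd : dvr_fact pi) (n : nat) (F : 'I_n -> A)
  (ex : 'I_n -> nat) (w : 'I_n -> A) N (i0 : 'I_n) :
  (forall i, F i = pi ^+ (ex i) * w i) -> (forall i, i != i0 -> N < ex i)%N ->
  ex i0 = N -> w i0 \is a GRing.unit ->
  exists v, v \is a GRing.unit /\ \sum_i F i = pi ^+ N * v.
Proof.
move=> hF hN hi0 wU.
have [r hr] := @sum_dvd A pi n (fun i => i != i0) F ex w N.+1 hF hN.
exists (w i0 + pi * r); split; first exact: unit_add.
rewrite (bigD1 i0) //= hr hF hi0 exprS; ring.
Qed.

Lemma binom_expand (A : idomainType) (x : A) (p : nat) :
  (1 + x) ^+ p - 1 = \sum_(i < p) x ^+ i.+1 *+ 'C(p, i.+1).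
Proof.
rewrite [1 + x]addrC exprD1n big_ord_recl expr0 bin0 mulr1n.
rewrite addrAC subrr add0r; apply: eq_bigr => i _; by rewrite lift0.
Qed.

Definition exf (p e j : nat) (i : nat) : nat := if (i.+1 < p)%N then (e + j * i.+1)%N else (j * p)%N.

Lemma term_form (A : idomainType) (pi u0 y : A) (p e j : nat) (hp : prime p)
  (hpe : p%:R = u0 * pi ^+ e) (i : 'I_p) :
  (pi ^+ j * y) ^+ i.+1 *+ 'C(p, i.+1) =
  pi ^+ (exf p e j i) * (if (i.+1 < p)%N then u0 * ('C(p, i.+1) %/ p)%:R * y ^+ i.+1 else y ^+ p).
Proof.
rewrite /exf; case: ifP => hi.
  have hd : (p %| 'C(p, i.+1))%N by apply: prime_dvd_bin => //; rewrite hi.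
  have hC : ('C(p, i.+1))%:R = ('C(p, i.+1) %/ p)%:R * (p%:R : A) by rewrite -natrM divnK.
  rewrite -mulr_natr hC hpe exprMn -exprM exprD.
  set a := pi ^+ (j * i.+1); set b := pi ^+ e; set c := (_ %/ p)%:R; set d := y ^+ i.+1; ring.
move/negbT: hi; rewrite -leqNgt => hi.
have -> : i.+1 = p by apply/eqP; rewrite eqn_leq hi ltn_ord.
by rewrite binn mulr1n exprMn -exprM.
Qed.

Definition nextv (p e j : nat) : nat := if ((p.-1) * j < e)%N then (p * j)%N else (e + j)%N.

Lemma step_dvd (A : idomainType) (pi u0 x : A) (p e j : nat) (hp : prime p)
  (hpe : p%:R = u0 * pi ^+ e) :
  dvdA (pi ^+ j) x -> dvdA (pi ^+ (nextv p e j)) ((1 + x) ^+ p - 1).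
Proof.
move=> [y ->]; rewrite binom_expand.
have hN : forall i : 'I_p, xpredT i -> (nextv p e j <= exf p e j i)%N.
  move=> i _; rewrite /nextv /exf.
  have p2 := prime_gt1 hp.
  case: p p2 {hp hpe} i => // p' p2 i.
  move: (ltn_ord i) => hi.
  rewrite succnK; case: ifP => h1; case: ifP => h2; nia.
have [r hr] := @sum_dvd A pi p xpredT (fun i : 'I_p => (pi ^+ j * y) ^+ i.+1 *+ 'C(p, i.+1))
  (fun i => exf p e j i)
  (fun i : 'I_p => if (i.+1 < p)%N then u0 * ('C(p, i.+1) %/ p)%:R * y ^+ i.+1 else y ^+ p)
  (nextv p e j) (term_form y j hp hpe) hN.
by exists r.
Qed.

Lemma step_exact (A : idomainType) (pi u0 x y : A) (p e j : nat) (hp : prime p)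
  (npi : pi \isn't a GRing.unit) (hd : dvr_fact pi)
  (hpe : p%:R = u0 * pi ^+ e) (u0U : u0 \is a GRing.unit) :
  ((p.-1) * j != e)%N -> x = pi ^+ j * y -> y \is a GRing.unit ->
  exists v, v \is a GRing.unit /\ (1 + x) ^+ p - 1 = pi ^+ (nextv p e j) * v.
Proof.
move=> hne -> yU; rewrite binom_expand.
have p2 := prime_gt1 hp.
have [hlt|hgt] : ((p.-1) * j < e \/ e < (p.-1) * j)%N by move: hne; lia.
- have hi0 : (p.-1 < p)%N by lia.
  apply: (@sum_exact A pi npi hd p _ (fun i => exf p e j i)
   (fun i : 'I_p => if (i.+1 < p)%N then u0 * ('C(p, i.+1) %/ p)%:R * y ^+ i.+1 else y ^+ p)
   _ (Ordinal hi0) (term_form y j hp hpe)).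
  + move=> i hi; rewrite /nextv /exf hlt.
    have hne' : (i : nat) != p.-1 by apply: contra hi => /eqP h; apply/eqP/val_inj.
    move: (nat_of_ord i) (ltn_ord i) hne' => k hk hk'.
    clear hi i hi0 hpe hp hne; case: p p2 hlt hk hk' => // p' p2.
    rewrite succnK => hlt hk hk'; case: ifP => h1; nia.
  + by rewrite /nextv /exf /= hlt prednK ?ltnn 1?mulnC //; lia.
  + by rewrite /= prednK ?ltnn; [exact: unitrX | lia].
- have hi0 : (0 < p)%N by lia.
  have nlt : ((p.-1) * j < e)%N = false by lia.
  apply: (@sum_exact A pi npi hd p _ (fun i => exf p e j i)
   (fun i : 'I_p => if (i.+1 < p)%N then u0 * ('C(p, i.+1) %/ p)%:R * y ^+ i.+1 else y ^+ p)
   _ (Ordinal hi0) (term_form y j hp hpe)).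
  + move=> i hi; rewrite /nextv /exf nlt.
    have hne' : (i : nat) != 0%N by apply: contra hi => /eqP h; apply/eqP/val_inj.
    move: (nat_of_ord i) (ltn_ord i) hne' => k hk hk'.
    clear hi i hi0 hpe hp nlt hne; case: p p2 hgt hk hk' => // p' p2.
    rewrite succnK => hgt hk hk'; case: ifP => h1; nia.
  + by rewrite /nextv /exf /= nlt p2; lia.
  + rewrite /= p2 bin1 divnn (ltnW p2) mulr1 expr1.
    by rewrite unitrM u0U yU.
Qed.

Lemma gclosed (p e cn : nat) (p2 : (1 < p)%N)
  (F1 : forall t, (t < cn)%N -> ((p.-1) * p ^ t < e)%N)
  (F2 : (e < (p.-1) * p ^ cn)%N) (t : nat) :
  iter t (nextv p e) 1%N = if (t <= cn)%N then (p ^ t)%N else (p ^ cn + e * (t - cn))%N.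
Proof.
elim: t => [|t IH]; first by [].
rewrite iterS IH /nextv.
have [htc|htc] := ltnP t cn.
  by rewrite (ltnW htc) F1 // expnS.
have [ht|ht] := leqP t cn.
  have -> : t = cn by apply/eqP; rewrite eqn_leq ht htc.
  by rewrite ltnNge (ltnW F2) /= subSnn muln1 addnC.
move: F2; set P := (p ^ cn)%N => F2.
rewrite ifF.
  have -> : (t.+1 - cn = (t - cn).+1)%N by lia.
  by rewrite mulnS; lia.
case: (p) p2 F2 => // p' _ /= F2; apply/negbTE; rewrite -leqNgt; nia.
Qed.

Lemma gne (p e cn : nat) (p2 : (1 < p)%N)
  (F1 : forall t, (t < cn)%N -> ((p.-1) * p ^ t < e)%N)
  (F2 : (e < (p.-1) * p ^ cn)%N) (t : nat) :
  ((p.-1) * iter t (nextv p e) 1%N != e)%N.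
Proof.
rewrite (gclosed p2 F1 F2); case: ifP => ht.
  have [htc|htc] := ltnP t cn; first by rewrite neq_ltn F1.
  have -> : t = cn by apply/eqP; rewrite eqn_leq ht htc.
  by rewrite neq_ltn F2 orbT.
move: F2; set P := (p ^ cn)%N => F2; rewrite neq_ltn; apply/orP; right; apply: (leq_trans F2); by rewrite leq_mul2l leq_addr orbT.
Qed.

Lemma dvd_add (A : idomainType) (d x y : A) : dvdA d x -> dvdA d y -> dvdA d (x + y).
Proof. by move=> [a ->] [b ->]; exists (a + b); rewrite mulrDr. Qed.

Lemma dvd_mulr (A : idomainType) (d x y : A) : dvdA d x -> dvdA d (y * x).
Proof. by move=> [a ->]; exists (y * a); rewrite mulrCA. Qed.

Lemma pow_sub1 (A : idomainType) (b : A) (m : nat) : exists S, b ^+ m - 1 = (b - 1) * S.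
Proof. by exists (\sum_(i < m) b ^+ (m.-1 - i) * 1 ^+ i); rewrite -(expr1n A m) subrXX expr1n. Qed.

Lemma pow_dvd (A : idomainType) (pi u0 a : A) (p e : nat) (hp : prime p)
  (hpe : p%:R = u0 * pi ^+ e) : dvdA pi (a - 1) ->
  forall t, dvdA (pi ^+ (iter t (nextv p e) 1%N)) (a ^+ (p ^ t) - 1).
Proof.
move=> ha; elim=> [|t IH]; first by rewrite /= expr1 expn0 expr1.
rewrite iterS expnS mulnC exprM.
have -> : a ^+ (p ^ t) = 1 + (a ^+ (p ^ t) - 1) by rewrite addrC subrK.
exact: step_dvd hp hpe IH.
Qed.

Lemma pow_exact (A : idomainType) (pi u0 : A) (p e : nat) (hp : prime p)
  (npi : pi \isn't a GRing.unit) (hd : dvr_fact pi)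
  (hpe : p%:R = u0 * pi ^+ e) (u0U : u0 \is a GRing.unit)
  (hne : forall t, ((p.-1) * iter t (nextv p e) 1%N != e)%N) :
  forall t, exists v, v \is a GRing.unit /\
    (1 + pi) ^+ (p ^ t) - 1 = pi ^+ (iter t (nextv p e) 1%N) * v.
Proof.
elim=> [|t [v [vU hv]]].
  by exists 1; rewrite unitr1 expn0 expr1 /= expr1 mulr1 addrAC subrr add0r.
rewrite iterS expnS mulnC exprM.
have -> : (1 + pi) ^+ (p ^ t) = 1 + ((1 + pi) ^+ (p ^ t) - 1) by rewrite [RHS]addrC subrK.
exact: step_exact hp npi hd hpe u0U (hne t) hv vU.
Qed.

Lemma sum_geom_unit (A : idomainType) (pi u0 : A) (p e : nat) (hp : prime p)
  (he : (0 < e)%N) (hpe : p%:R = u0 * pi ^+ e)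
  (npi : pi \isn't a GRing.unit) (hd : dvr_fact pi)
  (hchar : forall m : nat, (m.+1)%:R != 0 :> A)
  (m : nat) (hm : (0 < m)%N) (cop : coprime p m) (b : A) (hb : dvdA pi (b - 1)) :
  exists S, S \is a GRing.unit /\ b ^+ m - 1 = (b - 1) * S.
Proof.
set S := \sum_(i < m) b ^+ (m.-1 - i) * 1 ^+ i.
have hS : b ^+ m - 1 = (b - 1) * S by rewrite /S -(expr1n A m) subrXX expr1n.
exists S; split => //.
have hSm : dvdA pi (S - m%:R).
  have -> : S - m%:R = \sum_(i < m) (b ^+ (m.-1 - i) * 1 ^+ i - 1).
    by rewrite sumrB sumr_const card_ord.
  apply: (big_ind (fun x => dvdA pi x)); first by exists 0; rewrite mulr0.
    by move=> x y; apply: dvd_add.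
  move=> i _; rewrite expr1n mulr1.
  have [T ->] := pow_sub1 b (m.-1 - i); rewrite mulrC; exact: dvd_mulr.
have mU : (m%:R : A) \is a GRing.unit.
  have mnz : (m%:R : A) != 0 by case: m hm {S hS hSm cop} => // m' _; apply: hchar.
  have [u [k [uU hu]]] := hd _ mnz.
  case: k hu => [|k] hu; first by rewrite hu expr0 mulr1.
  exfalso.
  have hpm : dvdA pi (m%:R) by exists (u * pi ^+ k); rewrite hu exprS; ring.
  have hpp : dvdA pi (p%:R).
    by case: e he hpe => // e' _ ->; exists (u0 * pi ^+ e'); rewrite exprS; ring.
  have [a _ ha] := Bezoutl p hm.
  have g1 : gcdn m p = 1%N by rewrite gcdnC; apply/eqP.
  rewrite g1 in ha; case/dvdnP: ha => k' hk'.
  have h1 : (1 : A) = k'%:R * m%:R - a%:R * p%:R.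
    by rewrite -!natrM -hk' natrD addrK.
  move: hpm hpp => [x hx] [y hy].
  apply: (unit_notdvd npi (unitr1 A) (s := k'%:R * x - a%:R * y)).
  by rewrite {1}h1 hx hy; ring.
have [r hr] := hSm.
have -> : S = m%:R + pi * r by rewrite -hr addrC subrK.
exact: unit_add.
Qed.

Theorem mainTheorem15 (A : idomainType) (p : nat) (pi : A) (e : nat)
  (hA : @padic_ring_of_integers A p pi e)
  (hlog : forall k : int, (e%:Q / (p.-1)%:Q) != (p%:Q) ^ k)
  (n : nat) (hn : (0 < n)%N)
  (c : int) (hc : (p%:Q) ^ (c - 1) < e%:Q / (p.-1)%:Q <= (p%:Q) ^ c)
  (i : nat)
  (hi : i%:Q = (if c <= (logn p n)%:Z
                then e%:Q * ((logn p n)%:Q - c%:~R) + (p%:Q) ^ c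
                else (p%:Q) ^+ (logn p n))) :
  quotients_isomorphic (I_ideal pi n) (dvdA (pi ^+ i)).
Proof.
case: hA => hp [he [[pi0 [npi hdvr]] [_ [hchar [_ [u0 [u0U hpe]]]]]]].
have p2 := prime_gt1 hp.
have eQ : forall k : nat, k%:Q = k%:R :> rat by [].
rewrite !eQ in hc hi.
have hD : (0 : rat) < (p.-1)%:R by rewrite ltr0n; lia.
have hP : forall t, (0 : rat) < (p%:R) ^+ t by move=> t; rewrite exprn_gt0 // ltr0n; lia.
set k := logn p n in hi.
case: c hc hi => [cn|m] hc hi; last first.
  exfalso; move: hc => /andP [_ hr].
  have {}hr : (e%:R / (p.-1)%:R <= ((p%:R : rat) ^+ m.+1)^-1) by exact: hr.
  rewrite ler_pdivrMr // mulrC ler_pdivlMr // -natrX -!natrM ler_nat in hr.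
  have : (p ^ 1 <= p ^ m.+1)%N by apply: leq_pexp2l; lia.
  rewrite expn1; nia.
move: hc => /andP [hl hr].
have {}hr : (e%:R / (p.-1)%:R <= ((p%:R : rat) ^+ cn)) by exact: hr.
have hne := hlog (Posz cn); rewrite !eQ in hne.
have {}hne : (e%:R / (p.-1)%:R != ((p%:R : rat) ^+ cn)) by exact: hne.
have hlt : (e%:R / (p.-1)%:R : rat) < (p%:R) ^+ cn by rewrite lt_neqAle hne hr.
rewrite ltr_pdivrMr // -natrX -natrM ltr_nat in hlt.
have F2 : (e < p.-1 * p ^ cn)%N by rewrite mulnC.
have F1 : forall t, (t < cn)%N -> (p.-1 * p ^ t < e)%N.
  case: cn {hr hne hlt F2 hi} hl => // t hl s hs.
  have ht : (Posz t.+1 - 1 = Posz t)%R by rewrite -addn1 PoszD addrK.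
  rewrite ht in hl; have {}hl : ((p%:R : rat) ^+ t < e%:R / (p.-1)%:R) by exact: hl.
  rewrite ltr_pdivlMr // -natrX -natrM ltr_nat in hl.
  apply: leq_ltn_trans hl; rewrite mulnC leq_mul2r leq_pexp2l ?orbT //; lia.
have hG : iter k (nextv p e) 1%N = i.
  rewrite (gclosed p2 F1 F2); move: hi; rewrite lez_nat.
  case: ifP => hck hi.
    have hi' : (i%:R : rat) = (e * (k - cn) + p ^ cn)%:R.
      by rewrite natrD natrM natrB // natrX hi.
    move/eqP: hi'; rewrite eqr_nat => /eqP ->.
    case: ifP => hkc; last by rewrite addnC.
    have -> : k = cn by apply/eqP; rewrite eqn_leq hkc hck.
    by rewrite subnn muln0 add0n.
  have hi' : (i%:R : rat) = (p ^ k)%:R by rewrite natrX hi.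
  move/eqP: hi'; rewrite eqr_nat => /eqP ->.
  by rewrite ifT //; move/negbT: hck; rewrite -ltnNge => /ltnW.
have [m cop hnm] := pfactor_coprime hp hn.
have hm : (0 < m)%N by move: hn; rewrite hnm muln_gt0 => /andP [].
rewrite -/k in hnm.
have Iiff : forall z, I_ideal pi n z <-> dvdA (pi ^+ i) z.
  move=> z; split.
    move=> [s [hs ->]].
    rewrite big_seq; apply: (big_ind (fun x => dvdA (pi ^+ i) x)).
    - by exists 0; rewrite mulr0.
    - by move=> x y; apply: dvd_add.
    move=> q qs; apply: dvd_mulr.
    rewrite hnm mulnC exprM.
    have [S ->] := pow_sub1 (q.2 ^+ (p ^ k)) m.
    rewrite mulrC; apply: dvd_mulr; rewrite -hG.
    exact: pow_dvd hp hpe (hs q qs) k.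
  move=> [y ->].
  have [v [vU hv]] := pow_exact hp npi hdvr hpe u0U (gne p2 F1 F2) k.
  have hb : dvdA pi ((1 + pi) ^+ (p ^ k) - 1).
    have [S' ->] := pow_sub1 (1 + pi) (p ^ k).
    by rewrite addrAC subrr add0r; exists S'.
  have [S [SU hS]] := sum_geom_unit hp he hpe npi hdvr hchar hm cop hb.
  have heq : (1 + pi) ^+ n - 1 = pi ^+ i * (v * S).
    by rewrite hnm mulnC exprM hS hv hG mulrA.
  have WU : v * S \is a GRing.unit by rewrite unitrM vU SU.
  exists [:: (y * (v * S)^-1, 1 + pi)]; split.
    move=> q; rewrite inE => /eqP -> /=; exists 1.
    by rewrite mulr1 addrAC subrr add0r.
  rewrite big_seq1 /= heq mulrCA -mulrA mulVr // mulr1 mulrC //.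
exists (fun x => x); split; first by move=> x y; apply: Iiff.
split; first by move=> x y; exists 0; rewrite subrr mulr0.
split; first by move=> x y; exists 0; rewrite subrr mulr0.
split; first by exists 0; rewrite subrr mulr0.
by move=> z; exists z; exists 0; rewrite subrr mulr0.
Qed.
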